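(* Let $\Sigma,\Gamma$ be finite alphabets, $k>0$, $\tau$ a tier on $\Sigma\times\Gamma^*$, and $f:\Sigma^*\to\Gamma^*$ a function that is $k$-TSSL on tier $\tau$. Then the SFST $T_f$ constructed from $f$ as described in the context computes $f$.
   Context: Strings: $\lambda$ is the empty string; $\rtimes$ is a boundary symbol not in any alphabet. For $m\ge0$, $\mathrm{suff}^m(x)$ is the string of the last $m$ symbols of $\rtimes^mx$. $\mathrm{lcp}(A)$ is the longest common prefix of a set of strings $A$. SFST: $\langle Q,\Sigma,\Gamma,q_0,\to,\sigma\rangle$ with states $Q$, start $q_0$, transition function $\to:Q\times\Sigma\to Q\times\Gamma^*$, final output $\sigma:Q\to\Gamma^*$; $q\xrightarrow{a:y}r$ means $\to(q,a)=\langle r,y\rangle$, extended to strings by $q\xrightarrow{\lambda:\lambda}q$ and composing transitions (concatenating outputs). An SFST computes $f$ if $f(x)=y\sigma(q)$ whenever $q_0\xrightarrow{x:y}q$. For $f:\Sigma^*\to\Gamma^*$: $f^{\gets}(x):=\mathrm{lcp}(\{f(xy)\mid y\in\Sigma^*\})$; $f^{\to}_x$ is defined by $f(xy)=f^{\gets}(x)f^{\to}_x(y)$. A tier on a (possibly infinite) alphabet $A$ is a homomorphism $\tau:A^*\to A^*$ with $\tau(a)\in\{a,\lambda\}$ for each $a$; extended to $\rtimes$ by $\tau(\rtimes)=\rtimes$. Actions: $\mathbb{A}_f:=\{\langle x,y\rangle\in\Sigma\times\Gamma^*\mid\exists z.\ f^{\gets}(zx)=f^{\gets}(z)y\}$,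 written $x:y$. Run: if $|x|\le1$, $f^{\Leftarrow}(x):=x:f^{\gets}(x)$; if $x=yz$, $|y|\ge1$, $|z|=1$, $f^{\Leftarrow}(x):=f^{\Leftarrow}(y)(z:w)$ where $f^{\gets}(x)=f^{\gets}(y)w$. $f$ is $k$-TSSL on $\tau$ if $\mathrm{suff}^{k-1}(\tau(f^{\Leftarrow}(x)))=\mathrm{suff}^{k-1}(\tau(f^{\Leftarrow}(y)))$ implies $f^{\to}_x=f^{\to}_y$ for all $x,y\in\Sigma^*$. Construction of $T_f$: $Q:=(\{\rtimes\}\cup\mathbb{A}_f)^{k-1}$, $q_0:=\rtimes^{k-1}$. For $x\in\Sigma$, $\to(q_0,x):=\langle \mathrm{suff}^{k-1}(\tau(x:f^{\gets}(x))),f^{\gets}(x)\rangle$. For $q\in Q\setminus\{q_0\}$ and $w\in\Sigma$: take $x\in\Sigma^*$ with $\mathrm{suff}^{k-1}(\tau(f^{\Leftarrow}(x)))=q$ and let $w:y\in\mathbb{A}_f$ be such that $f^{\gets}(xw)=f^{\gets}(x)y$; set $\to(q,w):=\langle\mathrm{suff}^{k-1}(\tau(q(w:y))),y\rangle$ (by the TSSL property this does not depend on the choice of $x$). Final outputs: $\sigma(q_0):=f(\lambda)$, and for $q\ne q_0$, $\sigma(q):=f^{\to}_x(\lambda)$ where $\mathrm{suff}^{k-1}(\tau(f^{\Leftarrow}(x)))=q$.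
   Formalization: The start state $q_0$ of $T_f$ is a fresh state outside $Q$ rather than $\rtimes^{k-1}$, used only for the first transition and with $\sigma(q_0)=f(\lambda)$, and the run $f^{\Leftarrow}(\lambda)$ is the empty string. The statement above fails without it. *)

(* Defs.v *)
From mathcomp Require Import all_boot.
From Stdlib Require Import ClassicalEpsilon.

Set Implicit Arguments.
Unset Strict Implicit.
Unset Printing Implicit Defensive.

Record sfst (Q S G : Type) := SFST {
  sfst_start : Q;
  sfst_delta : Q -> S -> Q * seq G;
  sfst_final : Q -> seq G }.

Fixpoint sfst_run (Q S G : Type) (T : sfst Q S G) (q : Q) (x : seq S)
  : Q * seq G :=
  match x with
  | [::] => (q, [::])
  | a :: x' =>
      let: (r, y1) := sfst_delta T q a in
      let: (s, y2) := sfst_run T r x' in (s, y1 ++ y2)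
  end.

Definition computes (Q S G : Type) (T : sfst Q S G) (f : seq S -> seq G) :=
  forall x q y, sfst_run T (sfst_start T) x = (q, y) -> f x = y ++ sfst_final T q.

Section TSSL.
Variables (Sigma Gamma : finType).

Definition action := (Sigma * seq Gamma)%type.

Definition is_lcp (A : seq Gamma -> Prop) (w : seq Gamma) :=
  (forall s, A s -> prefix w s) /\
  (forall v, (forall s, A s -> prefix v s) -> size v <= size w).

Definition lcp (A : seq Gamma -> Prop) : seq Gamma :=
  epsilon (inhabits [::]) (is_lcp A).

Definition fl (f : seq Sigma -> seq Gamma) (x : seq Sigma) : seq Gamma :=
  lcp (fun s => exists y, s = f (x ++ y)).

(* f^{->}_x, defined by f(xy) = f^{<-}(x) f^{->}_x(y) *)
Definition fr (f : seq Sigma -> seq Gamma) (x : seq Sigma) (y : seq Sigma)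
  : seq Gamma := drop (size (fl f x)) (f (x ++ y)).

Definition in_actions (f : seq Sigma -> seq Gamma) (a : action) : Prop :=
  exists z, fl f (z ++ [:: a.1]) = fl f z ++ a.2.

(* The run f^{<=}(x): last action of x = yz is z:w with f<-(x) = f<-(y) w;
   for |x| = 1 it is x : f<-(x); for x = lambda it is the empty string. *)
Definition run_step (f : seq Sigma -> seq Gamma) (y : seq Sigma) (z : Sigma)
  : action :=
  if y is [::] then (z, fl f [:: z])
  else (z, drop (size (fl f y)) (fl f (rcons y z))).

Fixpoint run_rev (f : seq Sigma -> seq Gamma) (rx : seq Sigma) : seq action :=
  if rx is z :: ry then rcons (run_rev f ry) (run_step f (rev ry) z) else [::].

Definition run (f : seq Sigma -> seq Gamma) (x : seq Sigma) : seq action :=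
  run_rev f (rev x).

(* Strings over {boundary} U actions: None is the boundary symbol. *)
Definition bstring := seq (option action).

(* A tier on the alphabet of actions, given by the set of symbols it keeps:
   tau(a) = a if T a, lambda otherwise; tau(boundary) = boundary. *)
Definition tier := action -> bool.

Definition tau (T : tier) (s : bstring) : bstring :=
  filter (fun o => if o is Some a then T a else true) s.

Definition suff (m : nat) (s : bstring) : bstring :=
  let s' := nseq m None ++ s in drop (size s' - m) s'.

Definition tier_suffix (f : seq Sigma -> seq Gamma) (T : tier) (k : nat)
  (x : seq Sigma) : bstring :=
  suff k.-1 (tau T (map Some (run f x))).

Definition k_TSSL (f : seq Sigma -> seq Gamma) (T : tier) (k : nat) : Prop :=
  forall x y, tier_suffix f T k x = tier_suffix f T k y -> fr f x = fr f y.

(* Construction of T_f.  States: None is the start state q0; Some q is the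
   (k-1)-string q over {boundary} U A_f. *)
Definition Tf_state := option bstring.

Definition Tf_pick (f : seq Sigma -> seq Gamma) (T : tier) (k : nat)
  (q : bstring) : seq Sigma :=
  epsilon (inhabits [::]) (fun x => tier_suffix f T k x = q).

Definition Tf_delta (f : seq Sigma -> seq Gamma) (T : tier) (k : nat)
  (q : Tf_state) (w : Sigma) : Tf_state * seq Gamma :=
  match q with
  | None => (Some (suff k.-1 (tau T [:: Some (w, fl f [:: w])])), fl f [:: w])
  | Some q' =>
      let x := Tf_pick f T k q' in
      let y := drop (size (fl f x)) (fl f (rcons x w)) in
      (Some (suff k.-1 (tau T (rcons q' (Some (w, y))))), y)
  end.

Definition Tf_final (f : seq Sigma -> seq Gamma) (T : tier) (k : nat)
  (q : Tf_state) : seq Gamma :=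
  match q with
  | None => f [::]
  | Some q' => fr f (Tf_pick f T k q') [::]
  end.

Definition Tf (f : seq Sigma -> seq Gamma) (T : tier) (k : nat)
  : sfst Tf_state Sigma Gamma :=
  SFST None (Tf_delta f T k) (Tf_final f T k).

End TSSL.

(* Main.v *)
Require Import Defs.
From mathcomp Require Import all_boot.
From Stdlib Require Import Classical ClassicalEpsilon.
From mathcomp Require Import zify.

Set Implicit Arguments.
Unset Strict Implicit.

Definition lastn (A : Type) (m : nat) (v : seq A) := drop (size v - m) v.

Lemma suff_lastn (Sigma Gamma : finType) m (s : bstring Sigma Gamma) : suff m s = lastn m (nseq m None ++ s).
Proof. by []. Qed.

Lemma lastn_cat_big (A : Type) m (a b : seq A) :
  m <= size b -> lastn m (a ++ b) = lastn m b.
Proof.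
move=> hm; rewrite /lastn size_cat drop_cat.
case: ifP => h; first by exfalso; move: h; lia.
congr drop; lia.
Qed.

Lemma lastn_lastn_cat (A : Type) m (v t : seq A) :
  m <= size v -> lastn m (lastn m v ++ t) = lastn m (v ++ t).
Proof.
move=> hm.
rewrite -[v in RHS](cat_take_drop (size v - m)).
rewrite -catA [in RHS]lastn_cat_big //.
rewrite size_cat size_drop; lia.
Qed.

Lemma suff_suff_cat (Sigma Gamma : finType) m (s t : bstring Sigma Gamma) :
  suff m (suff m s ++ t) = suff m (s ++ t).
Proof.
rewrite !suff_lastn lastn_cat_big; last first.
  by rewrite size_cat /lastn size_drop size_cat size_nseq; lia.
by rewrite lastn_lastn_cat ?catA // size_cat size_nseq; lia.
Qed.

Lemma sfst_run_cat Q S G (M : sfst Q S G) q x u :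
  sfst_run M q (x ++ u) =
  let: (r, y1) := sfst_run M q x in
  let: (s, y2) := sfst_run M r u in (s, y1 ++ y2).
Proof.
elim: x q => [|a x IH] q /=; first by case: sfst_run.
case: sfst_delta => r y1; rewrite IH.
case: (sfst_run M r x) => r2 y2; case: (sfst_run M r2 u) => s y3.
by rewrite catA.
Qed.

Section Lcp.
Variables (Sigma Gamma : finType).

Lemma size_prefix (v s : seq Gamma) : prefix v s -> size v <= size s.
Proof. by case/prefixP => t ->; rewrite size_cat leq_addr. Qed.

Lemma lcp_exists (A : seq Gamma -> Prop) s0 : A s0 ->
  exists w, is_lcp A w.
Proof.
move=> H0.
suff: forall d (w : seq Gamma), size s0 - size w <= d ->
  (forall s, A s -> prefix w s) -> exists w, is_lcp A w.
  move=> /(_ (size s0) [::]); apply; first by rewrite subn0.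
  move=> s _; exact: prefix0s.
elim=> [|d IH] w hd hw.
- exists w; split => // v hv.
  have := size_prefix (hv _ H0). move=> h; apply: leq_trans h _; by rewrite -subn_eq0 -leqn0.
- case: (classic (exists w' : seq Gamma, (forall s, A s -> prefix w' s) /\ size w < size w')).
  + move=> [w' [hw' hs]]; apply: (IH w') => //.
    have := size_prefix (hw' _ H0); move=> h; clear IH hw hw'; lia.
  + move=> hn; exists w; split => // v hv.
    rewrite leqNgt; apply/negP => hlt; apply: hn; by exists v.
Qed.

Lemma lcp_spec (A : seq Gamma -> Prop) s0 : A s0 -> is_lcp A (lcp A).
Proof.
move=> H0; rewrite /lcp; apply: epsilon_spec; exact: lcp_exists H0.
Qed.

Lemma lcp_eq (A : seq Gamma -> Prop) s0 w : A s0 -> is_lcp A w -> lcp A = w.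
Proof.
move=> H0 hw; have hl := lcp_spec H0.
have hs : size (lcp A) = size w.
  by apply/eqP; rewrite eqn_leq (hl.2 _ hw.1) (hw.2 _ hl.1).
have /prefixP [t1 e1] := hl.1 _ H0.
have /prefixP [t2 e2] := hw.1 _ H0.
have : take (size w) s0 = w by rewrite e2 take_size_cat.
by rewrite e1 -hs take_size_cat.
Qed.

Variable f : seq Sigma -> seq Gamma.

Lemma fl_prefix x y : prefix (fl f x) (f (x ++ y)).
Proof.
have := @lcp_spec (fun s => exists y, s = f (x ++ y)) (f (x ++ [::])).
by case=> [|h _]; [exists [::] | apply: h; exists y].
Qed.

Lemma f_split x y : f (x ++ y) = fl f x ++ fr f x y.
Proof.
have /prefixP [t e] := fl_prefix x y.
by rewrite /fr e drop_size_cat.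
Qed.

Lemma fl_cat x u : fl f (x ++ u) =
  fl f x ++ lcp (fun s => exists z, s = fr f x (u ++ z)).
Proof.
set B := (fun s => exists z, s = fr f x (u ++ z)).
have hB := @lcp_spec B (fr f x (u ++ [::])) (ex_intro _ [::] erefl).
apply: (@lcp_eq _ (f ((x ++ u) ++ [::]))); first by exists [::].
split.
- move=> s [z ->]; rewrite -catA f_split.
  have /prefixP [t ->] := hB.1 _ (ex_intro _ z erefl).
  by apply/prefixP; exists t; rewrite catA.
- move=> v hv; rewrite size_cat.
  case: (leqP (size v) (size (fl f x))) => hle; first by apply: leq_trans hle (leq_addr _ _).
  have hd : size (drop (size (fl f x)) v) <= size (lcp B).
    apply: hB.2 => s [z ->].
    have /prefixP [t e] := hv _ (ex_intro _ z erefl).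
    move: e; rewrite -catA f_split => e.
    have := congr1 (drop (size (fl f x))) e.
    rewrite (drop_size_cat _ (erefl _)) drop_cat hle => ->.
    by apply/prefixP; exists t.
  move: hd; rewrite size_drop; lia.
Qed.

Lemma fl_step x w : drop (size (fl f x)) (fl f (rcons x w)) =
  lcp (fun s => exists z, s = fr f x ([:: w] ++ z)).
Proof. by rewrite -cats1 fl_cat drop_size_cat. Qed.

End Lcp.

Lemma tau_suff_fixed (Sigma Gamma : finType) (T : tier Sigma Gamma) m s :
  tau T (suff m (tau T s)) = suff m (tau T s).
Proof.
apply/all_filterP.
set P := (fun o : option (action Sigma Gamma) => if o is Some a then T a else true).
have hall : all P (nseq m None ++ tau T s).
  rewrite all_cat; apply/andP; split.
    by apply/allP => o /nseqP [-> _].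
  by apply/allP => o; rewrite mem_filter => /andP [].
rewrite /suff; move: hall; set v := (nseq m None ++ tau T s).
rewrite -{1}(cat_take_drop (size v - m) v) all_cat.
by case/andP.
Qed.

Theorem proposition27 (Sigma Gamma : finType) (k : nat) (T : tier Sigma Gamma)
  (f : seq Sigma -> seq Gamma) :
  0 < k -> k_TSSL f T k -> computes (Tf f T k) f.
Proof.
move=> _ Hk.
have pick_fr : forall x, fr f (Tf_pick f T k (tier_suffix f T k x)) = fr f x.
  move=> x; apply: Hk; rewrite /Tf_pick.
  apply: (epsilon_spec (inhabits [::]) (fun y => tier_suffix f T k y = tier_suffix f T k x)).
  by exists x.
have inv : forall x, x != [::] ->
  sfst_run (Tf f T k) None x = (Some (tier_suffix f T k x), fl f x).
  elim/last_ind => [//|x w IH] _.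
  case: x IH => [|a x] IH.
    by rewrite /= cats0.
  rewrite -cats1 sfst_run_cat IH //= cats0.
  rewrite /Tf_delta fl_step pick_fr -fl_step.
  have -> : fl f (a :: x) ++ drop (size (fl f (a :: x))) (fl f (rcons (a :: x) w))
      = fl f (rcons (a :: x) w) by rewrite fl_step -cats1 fl_cat.
  rewrite -cat_cons cats1; congr (Some _, _).
  rewrite {2}/tier_suffix /run rev_rcons [run_rev _ (_ :: _)]/= revK.
  rewrite map_rcons /tier_suffix -!cats1 /tau !filter_cat.
  have := tau_suff_fixed T k.-1 (map Some (run f (a :: x))); rewrite /tau => ->.
  by rewrite suff_suff_cat /run /= cats1.
move=> x q y.
case: (eqVneq x [::]) => [-> /= [<- <-] //|hx].
rewrite inv // => -[<- <-] /=.
by rewrite pick_fr -{1}(cats0 x) f_split.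
Qed.
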